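(* Let $\mathcal{A}$ be a central S-ring over a finite group $G$. Then $\mathcal{A}$ is rational if and only if $\pi(\underline{X})\in\mathbb{Q}$ for all $\pi\in\mathrm{Irr}(\mathcal{A})$ and all basic sets $X\in\mathcal{S}(\mathcal{A})$.
   Context: For a finite group $G$ with identity $e$ and $X\subseteq G$, write $\underline{X}=\sum_{x\in X}x\in\mathbb{Z}G$. A subring $\mathcal{A}$ of $\mathbb{Z}G$ is an S-ring over $G$ if there is a partition $\mathcal{S}(\mathcal{A})$ of $G$ (basic sets) such that $\{e\}\in\mathcal{S}(\mathcal{A})$, $X\in\mathcal{S}(\mathcal{A})\Rightarrow X^{-1}\in\mathcal{S}(\mathcal{A})$, and $\mathcal{A}$ is the $\mathbb{Z}$-span of $\{\underline{X}: X\in\mathcal{S}(\mathcal{A})\}$. $\mathcal{A}$ is central if $\mathcal{A}\subseteq\mathcal{Z}(\mathbb{Z}G)$; a central S-ring is commutative. $\mathrm{Irr}(\mathcal{A})$ denotes the set of irreducible complex characters of $\mathcal{A}$, i.e. the nonzero ring homomorphisms $\mathcal{A}\to\mathbb{C}$ (equivalently, the $\mathbb{C}$-algebra homomorphisms $\mathbb{C}\otimes\mathcal{A}\to\mathbb{C}$); they are exactly the maps $\frac{1}{\chi(1)}\chi|_{\mathcal{A}}$ for $\chi$ an irreducible complex character of $G$ extended linearly to $\mathbb{Z}G$. For an integer $m$, $X^{(m)}=\{x^m:x\in X\}$. A central S-ring $\mathcal{A}$ is rational if $X^{(m)}=X$ for every basic set $X$ of $\mathcal{A}$ and every integer $m$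 coprime to $|G|$. *)

(* Defs.v *)
From HB Require Import structures.
From mathcomp Require Import all_boot all_order all_algebra all_fingroup all_field.
Set Implicit Arguments. Unset Strict Implicit. Unset Printing Implicit Defensive.
Import GRing.Theory Num.Theory.
Local Open Scope ring_scope.

Section SRing.
Variable gT : finGroupType.

(* The integral group ring ZG, modelled as integer-valued functions on G = gT
   (a = \sum_g a(g) g), with the convolution product. *)
Definition ZG := {ffun gT -> int}.

Definition zg_mul (a b : ZG) : ZG :=
  [ffun z => \sum_(x : gT) a x * b ((x^-1) * z)%g].

Definition und (X : {set gT}) : ZG := [ffun g => (g \in X)%:Z].

Definition in_span (S : {set {set gT}}) (a : ZG) : Prop :=
  exists c : {set gT} -> int, a = [ffun g => \sum_(Z in S) c Z * und Z g].

(* S is the set of basic sets of an S-ring over G (the S-ring being the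
   Z-span of the underlines of S, which must be a subring of ZG). *)
Definition is_Sring (S : {set {set gT}}) : Prop :=
  [/\ partition S [set: gT],
      [set 1%g] \in S,
      (forall X, X \in S -> [set x^-1 | x in X]%g \in S)
    & (forall X Y, X \in S -> Y \in S -> in_span S (zg_mul (und X) (und Y)))].

Definition central_Sring (S : {set {set gT}}) : Prop :=
  forall X, X \in S -> forall a : ZG, zg_mul (und X) a = zg_mul a (und X).

Definition zexpg (x : gT) (m : int) : gT :=
  match m with Posz n => (x ^+ n)%g | Negz n => (x ^- n.+1)%g end.

Definition set_pow (X : {set gT}) (m : int) : {set gT} := [set zexpg x m | x in X].

Definition rational_Sring (S : {set {set gT}}) : Prop :=
  forall X, X \in S -> forall m : int, coprimez m #|gT| -> set_pow X m = X.

(* phi is (the extension to ZG of) an element of Irr(A): its restriction to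
   A = Z-span of S is a nonzero ring homomorphism A -> C.  Values outside A
   are irrelevant. *)
Definition is_Irr (S : {set {set gT}}) (phi : ZG -> algC) : Prop :=
  [/\ (forall a b, in_span S a -> in_span S b -> phi (a + b) = phi a + phi b),
      (forall a b, in_span S a -> in_span S b -> phi (zg_mul a b) = phi a * phi b)
    & (exists2 a, in_span S a & phi a != 0)].

End SRing.

(* Main.v *)
Require Import Defs.
From HB Require Import structures.
From mathcomp Require Import all_boot all_order all_algebra all_fingroup all_field.
From mathcomp Require Import all_solvable all_character.
Set Implicit Arguments. Unset Strict Implicit. Unset Printing Implicit Defensive.
Import GRing.Theory Num.Theory.
Local Open Scope ring_scope.

Section Basic.
Variables (gT : finGroupType) (S : {set {set gT}}).
Hypothesis pS : partition S [set: gT].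

Lemma blk_same Z Z' x y : Z \in S -> Z' \in S -> x \in Z -> y \in Z ->
  (x \in Z') = (y \in Z').
Proof.
case/and3P: pS => _ tI _ ZS Z'S xZ yZ.
apply/idP/idP => h.
- by have := def_pblock tI Z'S h; rewrite (def_pblock tI ZS xZ) => <-.
- by have := def_pblock tI Z'S h; rewrite (def_pblock tI ZS yZ) => <-.
Qed.

Lemma pblockS g : pblock S g \in S.
Proof. case/and3P: pS => /eqP cS tI _; apply: pblock_mem; by rewrite cS inE. Qed.

Lemma mem_pblockS g : g \in pblock S g.
Proof. case/and3P: pS => /eqP cS tI _; by rewrite mem_pblock cS inE. Qed.

Definition blockc (a : ZG gT) :=
  forall Z, Z \in S -> forall x y, x \in Z -> y \in Z -> a x = a y.

Lemma span_blockc a : in_span S a <-> blockc a.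
Proof.
split.
- case=> c -> Z ZS x y xZ yZ; rewrite !ffunE; apply: eq_bigr => Z' Z'S.
  by rewrite !ffunE (blk_same ZS Z'S xZ yZ).
- move=> ba; exists (fun Z => a (repr Z)); apply/ffunP => g; rewrite ffunE.
  case/and3P: pS => /eqP cS tI n0.
  rewrite (bigD1 (pblock S g)) ?pblockS //= big1 ?addr0.
    rewrite ffunE mem_pblockS mulr1; apply: (ba _ (pblockS g)) => //.
      exact: mem_pblockS.
    exact: mem_repr (mem_pblockS g).
  move=> Z /andP[ZS ne]; rewrite ffunE.
  case: (boolP (g \in Z)) => gZ; last by rewrite mulr0.
  by rewrite -(def_pblock tI ZS gZ) eqxx in ne.
Qed.

Lemma und_blockc Z : Z \in S -> blockc (und Z).
Proof. by move=> ZS Z' Z'S x y xZ yZ; rewrite !ffunE (blk_same Z'S ZS xZ yZ). Qed.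

End Basic.

Section Cen.
Variables (gT : finGroupType).

Lemma zg_mul_und1r (a : ZG gT) h z : zg_mul a (und [set h]) z = a (z * h^-1)%g.
Proof.
rewrite ffunE (bigD1 (z * h^-1)%g) //= big1 ?addr0.
  by rewrite ffunE inE invMg invgK mulgKV eqxx mulr1.
move=> x ne; rewrite ffunE inE; case: eqP => [e|]; last by rewrite mulr0.
by rewrite -e invMg invgK mulKVg eqxx in ne.
Qed.

Lemma zg_mul_und1l (a : ZG gT) h z : zg_mul (und [set h]) a z = a (h^-1 * z)%g.
Proof.
rewrite ffunE (bigD1 h) //= big1 ?addr0.
  by rewrite ffunE inE eqxx mul1r.
by move=> x ne; rewrite ffunE inE (negbTE ne) mul0r.
Qed.

Lemma cen_conj (Z : {set gT}) :
  (forall a : ZG gT, zg_mul (und Z) a = zg_mul a (und Z)) ->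
  forall g h, ((g ^ h)%g \in Z) = (g \in Z).
Proof.
move=> cZ g h; have := congr1 (fun f : ZG gT => f (h^-1 * g)%g) (cZ (und [set h^-1%g])).
rewrite /= zg_mul_und1r zg_mul_und1l !ffunE invgK mulgA mulgV mul1g.
by rewrite /conjg mulgA => -[]; do 2 case: (_ \in Z).
Qed.
End Cen.

Section Char.
Variable gT : finGroupType.
Variable i : Iirr [set: gT]%G.

Definition chs (a : ZG gT) : algC := \sum_g (a g)%:~R * 'chi_i g.
Definition om (a : ZG gT) : algC := chs a / 'chi_i 1%g.
Definition rho (a : ZG gT) := \sum_g (a g)%:~R *: 'Chi_i g.

Lemma chi_tr g : 'chi_i g = \tr ('Chi_i g).
Proof. by rewrite -irrRepr cfunE in_setT mulr1n. Qed.

Lemma tr_rho a : \tr (rho a) = chs a.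
Proof.
rewrite /rho raddf_sum; apply: eq_bigr => g _.
by rewrite /= mxtraceZ chi_tr.
Qed.

Lemma rhoM a b : rho (zg_mul a b) = rho a *m rho b.
Proof.
rewrite /rho mulmx_suml.
under eq_bigr do rewrite ffunE rmorph_sum scaler_suml.
rewrite exchange_big /=; apply: eq_bigr => x _.
rewrite mulmx_sumr (reindex_inj (mulgI x)) /=; apply: eq_bigr => y _.
by rewrite mulKg rmorphM -scalerA -scalemxAl -scalemxAr repr_mxM ?in_setT.
Qed.

Lemma rho_cen (a : ZG gT) : (forall g h, a (g ^ h)%g = a g) ->
  forall h, rho a *m 'Chi_i h = 'Chi_i h *m rho a.
Proof.
move=> ca h; rewrite /rho mulmx_suml mulmx_sumr.
rewrite [RHS](reindex_inj (@conjg_inj _ h)) /=; apply: eq_bigr => g _.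
rewrite ca -scalemxAl -scalemxAr -!repr_mxM ?in_setT //.
by rewrite /conjg mulKVg.
Qed.

Lemma rho_scal (a : ZG gT) : (forall g h, a (g ^ h)%g = a g) -> rho a = (om a)%:M.
Proof.
move=> ca; have : is_scalar_mx (rho a).
  apply: mx_abs_irr_cent_scalar; first exact/groupC/socle_irr.
  by apply/centgmxP => h _; apply: rho_cen.
case/is_scalar_mxP => c Dc; rewrite Dc; congr (_%:M).
rewrite /om -tr_rho Dc mxtrace_scalar irr1_degree.
by rewrite -[c *+ _]mulr_natr mulfK // pnatr_eq0 -lt0n irr_degree_gt0.
Qed.

Lemma om_mul (a b : ZG gT) : (forall g h, a (g ^ h)%g = a g) ->
  om (zg_mul a b) = om a * om b.
Proof.
move=> ca; rewrite {1}/om -tr_rho rhoM rho_scal // mul_scalar_mx mxtraceZ.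
by rewrite tr_rho -mulrA.
Qed.

End Char.

Lemma sep (gT : finGroupType) (b : ZG gT) : (forall g h, b (g ^ h)%g = b g) ->
  (forall i : Iirr [set: gT]%G, chs i b = 0) -> forall g, b g = 0.
Proof.
move=> cb z0.
have cfP : is_class_fun <<[set: gT]>>%g [ffun g => (b g)%:~R].
  rewrite genGid; apply: intro_class_fun => [x y _ _ | x]; first by rewrite cb.
  by rewrite in_setT.
pose f : 'CF([set: gT]%G) := Cfun 0 cfP.
have f0 : f = 0.
  rewrite [f]cfun_sum_cfdot big1 // => i _.
  rewrite cfdotE.
  have -> : \sum_(x in [set: gT]%G) f x * ('chi_i x)^* = chs (conjC_Iirr i) b.
    rewrite /chs; apply: eq_big => [x|x _]; first by rewrite in_setT.
    by rewrite cfunE conjC_IirrE cfunE.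
  by rewrite z0 mulr0 scale0r.
move=> g; have := congr1 (fun phi : 'CF([set: gT]%G) => phi g) f0.
by rewrite /= !cfunE => /eqP; rewrite intr_eq0 => /eqP.
Qed.

Lemma PW (gT : finGroupType) (nu : {rmorphism algC -> algC}) k :
  (forall z, z ^+ #|gT| = 1 -> nu z = z ^+ k) ->
  forall (i : Iirr [set: gT]%G) x, nu ('chi_i x) = 'chi_i (x ^+ k)%g.
Proof.
move=> hnu i x.
pose H := <[x]>%G.
have sHG : H \subset [set: gT]%G by apply: subsetT.
have xH : x \in H by apply: cycle_id.
have xkH : (x ^+ k)%g \in H by apply: mem_cycle.
rewrite -(cfResE _ sHG xH) -(cfResE _ sHG xkH).
have [r ->] := char_sum_irr (cfRes_char H (irr_char i)).
rewrite !sum_cfunE rmorph_sum; apply: eq_bigr => j _.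
have Lj : 'chi[H]_j \is a linear_char by apply/char_abelianP/cycle_abelian.
rewrite lin_charX // hnu //.
have : (#[x]%g %| #|gT|)%N by rewrite -cardsT; apply: order_dvdG; rewrite in_setT.
by case/dvdnP => q ->; rewrite mulnC exprM lin_char_unity_root // expr1n.
Qed.

Lemma om_rat (gT : finGroupType) (i : Iirr [set: gT]%G) (X : {set gT}) :
  (forall k, coprime k #|gT| ->
     \sum_(x in X) 'chi_i (x ^+ k)%g = \sum_(x in X) 'chi_i x) ->
  (\sum_(x in X) 'chi_i x) / 'chi_i 1%g \in Crat.
Proof.
move=> hX.
have [Qn galQn [QnC hext [w [prim_w genQn] hchar]]] :=
  group_num_field_exists [set: gT]%G.
have dv (x : gT) : (#[x]%g %| #|[set: gT]|)%N by apply: order_dvdG; rewrite in_setT.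
pose a x := sval (hchar gT [set: gT]%G 'chi_i (irr_char i) x (dv x)).
have Da x : QnC (a x) = 'chi_i x := svalP (hchar gT [set: gT]%G 'chi_i (irr_char i) x (dv x)).
pose A := (\sum_(x in X) a x) / a 1%g.
have DA : QnC A = (\sum_(x in X) 'chi_i x) / 'chi_i 1%g.
  by rewrite fmorph_div rmorph_sum Da; congr (_ / _); apply: eq_bigr => x _; rewrite Da.
have n_gt0 : (0 < #|gT|)%N by rewrite -cardsT cardG_gt0.
have prim_z : (#|gT|).-primitive_root (QnC w).
  by rewrite fmorph_primitive_root -cardsT.
have fixA : A \in fixedField ('Gal({:Qn} / 1%VS))%g.
  apply/fixedFieldP; first exact: memvf.
  move=> s _; have [nu Dnu] := hext s.
  apply: (fmorph_inj QnC); rewrite Dnu DA fmorph_div rmorph_sum.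
  have : (nu (QnC w)) ^+ #|gT| = 1.
    by rewrite -rmorphXn (prim_expr_order prim_z) rmorph1.
  case/(prim_rootP prim_z) => k Dk.
  have cok : coprime k #|gT|.
    by rewrite -(prim_root_exp_coprime k prim_z) -Dk fmorph_primitive_root.
  have hnu : forall e, e ^+ #|gT| = 1 -> nu e = e ^+ k.
    move=> e /(prim_rootP prim_z) [j ->].
    by rewrite rmorphXn Dk -!exprM mulnC.
  rewrite (eq_bigr (fun x => 'chi_i (x ^+ k)%g)) ?hX //; last first.
    by move=> x _; apply: PW.
  by rewrite irr1_degree rmorph_nat.
move: fixA; rewrite (galois_fixedField galQn) => /vlineP [c Dc].
have -> : (\sum_(x in X) 'chi_i x) / 'chi_i 1%g = ratr c.
  by rewrite -DA Dc alg_num_field fmorph_rat.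
exact: Crat_rat.
Qed.

Section Lin.
Variables (gT : finGroupType) (S : {set {set gT}}).
Variable psi : ZG gT -> algC.
Hypothesis psiD : forall a b, blockc S a -> blockc S b -> psi (a + b) = psi a + psi b.

Lemma blockc_lc (m n : int) a b : blockc S a -> blockc S b ->
  blockc S [ffun g => m * a g + n * b g].
Proof.
by move=> ba bb Z ZS x y xZ yZ; rewrite !ffunE (ba Z ZS x y) ?(bb Z ZS x y).
Qed.

Lemma blockc_sc (m : int) a : blockc S a -> blockc S [ffun g => m * a g].
Proof. by move=> ba Z ZS x y xZ yZ; rewrite !ffunE (ba Z ZS x y). Qed.

Lemma psi0 a : blockc S a -> psi [ffun g => 0 * a g] = 0.
Proof.
move=> ba; set z := [ffun g => _].
have bz : blockc S z by apply: blockc_sc.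
have zz : z + z = z by apply/ffunP => g; rewrite !ffunE mul0r addr0.
have := psiD bz bz; rewrite zz => /eqP; rewrite -subr_eq0 opprD addrA subrr sub0r.
by rewrite oppr_eq0 => /eqP.
Qed.

Lemma psi_nat a (n : nat) : blockc S a ->
  psi [ffun g => n%:Z * a g] = n%:R * psi a.
Proof.
move=> ba; elim: n => [|n IH]; first by rewrite psi0 // mul0r.
have -> : [ffun g => n.+1%:Z * a g] = [ffun g => n%:Z * a g] + a.
  by apply/ffunP => g; rewrite !ffunE -addn1 PoszD mulrDl mul1r.
rewrite psiD; [|exact: blockc_sc|exact: ba].
by rewrite IH mulrSr mulrDl mul1r.
Qed.

Lemma psi_int a (m : int) : blockc S a ->
  psi [ffun g => m * a g] = m%:~R * psi a.
Proof.
move=> ba; case: m => n; first by rewrite psi_nat.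
have := psiD (blockc_sc (Negz n) ba) (blockc_sc (Posz n.+1) ba).
have -> : [ffun g => Negz n * a g] + [ffun g => n.+1%:Z * a g] =
          [ffun g => 0 * a g].
  by apply/ffunP => g; rewrite !ffunE -mulrDl NegzE addNr.
rewrite psi0 // psi_nat // => /eqP; rewrite eq_sym addr_eq0 => /eqP ->.
by rewrite NegzE mulrNz mulNr.
Qed.

Lemma psi_lc (m n : int) a b : blockc S a -> blockc S b ->
  psi [ffun g => m * a g + n * b g] = m%:~R * psi a + n%:~R * psi b.
Proof.
move=> ba bb.
have -> : [ffun g => m * a g + n * b g] = [ffun g => m * a g] + [ffun g => n * b g].
  by apply/ffunP => g; rewrite !ffunE.
rewrite psiD; try exact: blockc_sc.
by rewrite !psi_int.
Qed.
End Lin.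

Section Main.
Variables (gT : finGroupType) (S : {set {set gT}}).
Hypothesis pS : partition S [set: gT].
Hypothesis S1 : [set 1%g] \in S.
Hypothesis Smul : forall X Y, X \in S -> Y \in S -> in_span S (zg_mul (und X) (und Y)).
Hypothesis HC : central_Sring S.

Lemma blk_conj a : blockc S a -> forall g h, a (g ^ h)%g = a g.
Proof.
move=> ba g h; have ZS := pblockS pS g; have gZ := mem_pblockS pS g.
apply: (ba _ ZS) => //; rewrite (cen_conj (HC ZS)) //.
Qed.

Lemma blockc_mul a b : blockc S a -> blockc S b -> blockc S (zg_mul a b).
Proof.
move=> ba bb; move/(span_blockc pS): ba => [c Da]; move/(span_blockc pS): bb => [d Db].
have E z : zg_mul a b z = \sum_(Z in S) \sum_(W in S)
    c Z * d W * zg_mul (und Z) (und W) z.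
  rewrite Da Db /zg_mul !ffunE.
  under eq_bigr do rewrite !ffunE big_distrl.
  under eq_bigr do under eq_bigr do rewrite big_distrr.
  rewrite exchange_big; apply: eq_bigr => Z _; rewrite exchange_big.
  apply: eq_bigr => W _; rewrite ffunE mulr_sumr; apply: eq_bigr => x _.
  by rewrite !ffunE mulrACA.
move=> Y YS x y xY yY; rewrite !E; apply: eq_bigr => Z ZS; apply: eq_bigr => W WS.
congr (_ * _); have /(span_blockc pS) h := Smul ZS WS; exact: h Y YS x y xY yY.
Qed.

Lemma chs_ind i (X : {set gT}) :
  \sum_g ((g \in X)%:Z)%:~R * 'chi[[set: gT]%G]_i g = \sum_(x in X) 'chi_i x.
Proof.
rewrite [RHS]big_mkcond; apply: eq_bigr => g _.
by case: (g \in X); rewrite ?mul1r ?mul0r.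
Qed.

Lemma chs_und (i : Iirr [set: gT]%G) (X : {set gT}) : chs i (und X) = \sum_(x in X) 'chi_i x.
Proof. by rewrite -chs_ind; apply: eq_bigr => g _; rewrite ffunE. Qed.

Lemma om_add (i : Iirr [set: gT]%G) (a b : ZG gT) : om i (a + b) = om i a + om i b.
Proof.
rewrite /om /chs -mulrDl -big_split; congr (_ / _); apply: eq_bigr => g _.
by rewrite ffunE rmorphD mulrDl.
Qed.

Lemma om_e (i : Iirr [set: gT]%G) : om i (und [set 1%g]) = 1.
Proof.
rewrite /om chs_und big_set1 divff //; exact: irr1_neq0.
Qed.

Lemma om_irr (i : Iirr [set: gT]%G) : is_Irr S (om i).
Proof.
split.
- by move=> a b _ _; apply: om_add.
- by move=> a b /(span_blockc pS) ba _; apply: om_mul; apply: blk_conj.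
- exists (und [set 1%g]); first by apply/(span_blockc pS); apply: und_blockc.
  by rewrite om_e oner_eq0.
Qed.

Lemma zexp_nat (m : int) : coprimez m #|gT| ->
  {k : nat | coprime k #|gT| & forall x : gT, zexpg x m = (x ^+ k)%g}.
Proof.
have N0 : (0 < #|gT|)%N by rewrite -cardsT cardG_gt0.
case: m => n co.
  by exists n => //.
exists (#|gT|.-1 * n.+1)%N.
  by rewrite coprimeMl coprimePn //.
move=> x /=; apply: (mulIg (x ^+ n.+1)%g); rewrite mulVg -expgD.
rewrite -{2}(mul1n n.+1) -mulnDl addn1 prednK // expgM.
by rewrite -cardsT expg_cardG ?in_setT // expg1n.
Qed.

Lemma pow_inj k : coprime k #|gT| -> injective (fun x : gT => (x ^+ k)%g).
Proof.
move=> co; have co' : coprime #|[set: gT]%G| k by rewrite cardsT coprime_sym.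
apply: (can_inj (g := fun x => (x ^+ (expg_invn [set: gT]%G k))%g)) => x.
by rewrite (expgK co') ?in_setT.
Qed.

End Main.

Theorem theorem3p3 (gT : finGroupType) (S : {set {set gT}}) :
  is_Sring S -> central_Sring S ->
  (rational_Sring S <->
   forall phi : ZG gT -> algC, is_Irr S phi ->
     forall X, X \in S -> phi (und X) \in Crat).
Proof.
case=> pS S1 _ Smul HC.
have N0 : (0 < #|gT|)%N by rewrite -cardsT cardG_gt0.
split.
- move=> Hrat phi [phiD phiM [a0 a0S a0nz]] X XS.
  have phiD' a b : blockc S a -> blockc S b -> phi (a + b) = phi a + phi b.
    by move=> /(span_blockc pS) ? /(span_blockc pS) ?; apply: phiD.
  have phiM' a b : blockc S a -> blockc S b -> phi (zg_mul a b) = phi a * phi b.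
    by move=> /(span_blockc pS) ? /(span_blockc pS) ?; apply: phiM.
  move/(span_blockc pS): a0S => a0S.
  have hX j : om j (und X) \in Crat.
    rewrite /om chs_und; apply: om_rat => k cok.
    have E : [set (x ^+ k)%g | x in X] = X.
      by have := Hrat X XS (Posz k); rewrite /set_pow /=; apply.
    rewrite -{2}E big_imset //=; move=> x y _ _; exact: pow_inj.
  have /fin_all_exists [q Dq] : forall j, exists q : rat, om j (und X) = ratr q.
    by move=> j; have /CratP [c Dc] := hX j; exists c.
  pose e : ZG gT := und [set 1%g].
  have eS : blockc S e by apply: und_blockc.
  have XS' : blockc S (und X) by apply: und_blockc.
  pose f j := [ffun g => (denq (q j)) * und X g + (- numq (q j)) * e g].
  have fS j : blockc S (f j) by apply: blockc_lc.
  pose bs s := foldr (fun j acc => zg_mul (f j) acc) e s.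
  have bsS s : blockc S (bs s).
    by elim: s => [|j s IH] //=; apply: blockc_mul.
  have ea0 : zg_mul e a0 = a0.
    by apply/ffunP => z; rewrite zg_mul_und1l invg1 mul1g.
  have phi_e : phi e = 1.
    have := phiM' e a0 eS a0S; rewrite ea0 -{1}(mul1r (phi a0)).
    by move/(mulIf a0nz).
  have phib s : phi (bs s) = \prod_(j <- s) phi (f j).
    elim: s => [|j s IH] /=; first by rewrite big_nil.
    by rewrite big_cons phiM' // IH.
  have omb i s : om i (bs s) = \prod_(j <- s) om i (f j).
    elim: s => [|j s IH] /=; first by rewrite big_nil om_e.
    rewrite big_cons om_mul ?IH //; exact: (blk_conj pS HC (fS j)).
  have ratrE (r : rat) : ratr r = (numq r)%:~R / (denq r)%:~R :> algC.
    by rewrite -{1}[r]divq_num_den fmorph_div /= !ratr_int.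
  have dq j : (denq (q j))%:~R != 0 :> algC by rewrite intr_eq0 denq_neq0.
  have omf i : om i (f i) = 0.
    rewrite (psi_lc (S := S)) //; last by move=> a b _ _; apply: om_add.
    by rewrite Dq /e om_e ratrE mulr1 mulrCA divff // mulr1 rmorphN addrN.
  pose b := bs (enum (Iirr [set: gT]%G)).
  have b0 : forall g, b g = 0.
    apply: sep; first exact: (blk_conj pS HC (bsS _)).
    move=> i; have : om i b = 0.
      rewrite omb; apply/eqP; rewrite prodf_seq_eq0; apply/hasP.
      by exists i; rewrite ?mem_enum // omf eqxx.
    by rewrite /om => /eqP; rewrite mulf_eq0 invr_eq0 (negbTE (irr1_neq0 i)) orbF => /eqP.
  have : phi b = 0.
    have -> : b = [ffun g => 0 * b g] by apply/ffunP => g; rewrite ffunE b0 mul0r.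
    exact: (psi0 phiD' (bsS _)).
  rewrite phib => /eqP; rewrite prodf_seq_eq0 => /hasP [j _ /= /eqP].
  rewrite (psi_lc (S := S)) // phi_e mulr1 mulrNz => /eqP; rewrite addr_eq0 opprK.
  move=> /eqP Dphi.
  have -> : phi (und X) = ratr (q j).
    by rewrite ratrE -Dphi mulrC mulKf.
  exact: Crat_rat.
- move=> Hirr X XS m com.
  have [k cok Dk] := zexp_nat com.
  have -> : set_pow X m = [set (x ^+ k)%g | x in X].
    by apply: eq_imset => x; apply: Dk.
  set Y := [set _ | x in X].
  have cX := cen_conj (HC X XS).
  have YJ g h : g \in Y -> (g ^ h)%g \in Y.
    case/imsetP => x xX ->; rewrite conjXg; apply: imset_f; by rewrite cX.
  have cY g h : ((g ^ h)%g \in Y) = (g \in Y).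
    apply/idP/idP => [/(YJ _ h^-1%g)|]; last exact: YJ.
    by rewrite conjgK.
  pose b : ZG gT := [ffun g => (g \in Y)%:Z - (g \in X)%:Z].
  have cb g h : b (g ^ h)%g = b g by rewrite !ffunE cY cX.
  have zb i : chs i b = 0.
    rewrite /chs; under eq_bigr do rewrite ffunE rmorphB mulrBl.
    rewrite sumrB !chs_ind big_imset /=; last by move=> x y _ _; exact: pow_inj.
    have [u Du] := Qn_aut_exists cok.
    rewrite (eq_bigr (fun x => u ('chi_i x))); last first.
      by move=> x _; rewrite (PW Du).
    rewrite -rmorph_sum.
    have hr := Hirr _ (om_irr pS S1 HC i) X XS.
    rewrite /om chs_und in hr.
    rewrite -[\sum_(x in X) _](divfK (irr1_neq0 i)) rmorphM aut_Crat //.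
    by rewrite irr1_degree rmorph_nat subrr.
  apply/setP => g; have := sep cb zb g; rewrite ffunE => /eqP.
  by rewrite subr_eq0 => /eqP []; do 2 case: (_ \in _).
Qed.
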